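(* Let $X$ be a $G$-space with $\mathrm{TC}^{G,\infty}(X)=0$. Then the orbit map $\rho_X\colon X\to X/G$ is nullhomotopic.
   Context: All spaces are well-pointed CW complexes, $G$ a topological group acting cellularly. $PX$ is the path space; $\mathcal{P}_k(X)=\{(\gamma_1,\dots,\gamma_k)\in(PX)^k\mid G\gamma_i(1)=G\gamma_{i+1}(0),\ 1\le i\le k-1\}$, $\pi_k\colon\mathcal{P}_k(X)\to X\times X$, $\pi_k(\gamma_1,\dots,\gamma_k)=(\gamma_1(0),\gamma_k(1))$. $\mathrm{secat}(f)$ (reduced) is the least $n\ge 0$ such that the base has an open cover $U_0,\dots,U_n$ admitting maps $s_i$ with $f\circ s_i\simeq$ inclusion. $\mathrm{TC}^{G,k}(X)=\mathrm{secat}(\pi_k)$, $\mathrm{TC}^{G,\infty}(X)=\min_k\mathrm{TC}^{G,k}(X)$. *)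

(* Defs.v *)
From HB Require Import structures.
From mathcomp Require Import all_boot all_order all_algebra generic_quotient.
From mathcomp Require Import all_classical all_reals topology.
From mathcomp Require Import Rstruct Rstruct_topology.
From Stdlib Require Import Rdefinitions.

Import Order.TTheory GRing.Theory Num.Theory.

Set Implicit Arguments.
Unset Strict Implicit.
Unset Printing Implicit Defensive.

Local Open Scope classical_set_scope.
Local Open Scope quotient_scope.

HB.mixin Record Group_isTopological (G : Type) of Group G & Topological G := {
  mulg_continuous : continuous (fun p : G * G => (p.1 * p.2)%g);
  invg_continuous : continuous (fun g : G => (g^-1)%g)
}.

#[short(type="topGroupType")]
HB.structure Definition TopologicalGroup :=
  {G of Group_isTopological G & Group G & Topological G}.

Record gaction (G : topGroupType) (X : topologicalType) := GAction {
  act : G -> X -> X;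
  act_continuous : continuous (fun p : G * X => act p.1 p.2);
  act1 : forall x, act 1%g x = x;
  actM : forall g h x, act (g * h)%g x = act g (act h x)
}.

Definition same_orbit G X (A : @gaction G X) (x y : X) : Prop :=
  exists g : G, act A g x = y.

Definition orbit_rel G X (A : @gaction G X) : rel X :=
  fun x y => `[< same_orbit A x y >].

Lemma orbit_rel_refl G X (A : @gaction G X) : reflexive (orbit_rel A).
Proof. by move=> x; apply/asboolP; exists 1%g; rewrite act1. Qed.

Lemma orbit_rel_sym G X (A : @gaction G X) : symmetric (orbit_rel A).
Proof.
have H : forall x y, orbit_rel A x y -> orbit_rel A y x.
  move=> x y /asboolP [g <-]; apply/asboolP; exists (g^-1)%g.
  by rewrite -actM mulVg act1.
by move=> x y; apply/idP/idP => /H.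
Qed.

Lemma orbit_rel_trans G X (A : @gaction G X) : transitive (orbit_rel A).
Proof.
move=> y x z /asboolP [g <-] /asboolP [h <-]; apply/asboolP.
by exists (h * g)%g; rewrite actM.
Qed.

Definition orbit_equiv G X (A : @gaction G X) : equiv_rel X :=
  EquivRel (orbit_rel A) (@orbit_rel_refl G X A) (@orbit_rel_sym G X A)
    (@orbit_rel_trans G X A).

Definition orbit_space G X (A : @gaction G X) : topologicalType :=
  quotient_topology {eq_quot (orbit_equiv A)}.

Definition orbit_map G X (A : @gaction G X) : X -> orbit_space A :=
  \pi_(orbit_space A).

Definition unit_interval : Type := set_type (`[0%R, 1%R]%classic : set R).

Lemma unit_interval0_subproof : (0%R : R) \in (`[0%R, 1%R]%classic : set R).
Proof. by rewrite inE /= in_itv /= lexx ler01. Qed.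

Lemma unit_interval1_subproof : (1%R : R) \in (`[0%R, 1%R]%classic : set R).
Proof. by rewrite inE /= in_itv /= lexx ler01. Qed.

Definition I0 : unit_interval := exist _ 0%R unit_interval0_subproof.
Definition I1 : unit_interval := exist _ 1%R unit_interval1_subproof.

Definition homotopic (A B : topologicalType) (f g : A -> B) : Prop :=
  exists H : A * unit_interval -> B,
    [/\ continuous H, forall a, H (a, I0) = f a & forall a, H (a, I1) = g a].

Definition nullhomotopic (A B : topologicalType) (f : A -> B) : Prop :=
  exists b : B, homotopic f (fun _ => b).

Definition path_space (X : topologicalType) : topologicalType :=
  @initial_topology (continuousType unit_interval X)
    {compact-open, unit_interval -> X} id.

Definition path_tuples (X : topologicalType) (k : nat) : topologicalType :=
  prod_topology (fun _ : 'I_k => path_space X).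

Definition Pk_set G X (A : @gaction G X) (k : nat) : set (path_tuples X k) :=
  [set γ | forall i j : 'I_k, nat_of_ord j = (nat_of_ord i).+1 ->
      same_orbit A ((γ i : continuousType unit_interval X) I1)
                   ((γ j : continuousType unit_interval X) I0)].

Definition Pk G X (A : @gaction G X) (k : nat) : topologicalType :=
  set_type (@Pk_set G X A k).

Arguments Pk_set {G X} A k _.

(** π_k : P_k(X) -> X × X, for k = n.+1 >= 1 *)
Definition pik G X (A : @gaction G X) (n : nat) : Pk A n.+1 -> X * X :=
  fun γ => (((set_val γ) ord0 : continuousType unit_interval X) I0,
            ((set_val γ) ord_max : continuousType unit_interval X) I1).

Arguments pik {G X} A n _.

Definition secat_le (E B : topologicalType) (f : E -> B) (n : nat) : Prop :=
  exists U : 'I_n.+1 -> set B,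
    [/\ forall i, open (U i),
        \bigcup_i U i = setT &
        forall i, exists s : set_type (U i) -> E,
          continuous s /\ homotopic (f \o s) (@set_val B (U i))].

Definition secat_eq (E B : topologicalType) (f : E -> B) (n : nat) : Prop :=
  secat_le f n /\ forall m, secat_le f m -> (n <= m)%N.

Definition TCG_eq G X (A : @gaction G X) (k n : nat) : Prop :=
  exists k', k = k'.+1 /\ secat_eq (@pik G X A k') n.

Definition TCGinf_eq G X (A : @gaction G X) (n : nat) : Prop :=
  (exists k, TCG_eq A k n) /\ forall k m, TCG_eq A k m -> (n <= m)%N.

(* Main.v *)
Require Import Defs.
From HB Require Import structures.
From mathcomp Require Import all_boot all_order all_algebra generic_quotient.
From mathcomp Require Import all_classical all_reals topology.
From mathcomp Require Import Rstruct Rstruct_topology normedtype.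
From Stdlib Require Import Rdefinitions.
From mathcomp Require Import lra.
Import Order.TTheory GRing.Theory Num.Theory.
Local Open Scope classical_set_scope.
Local Open Scope ring_scope.

Lemma cont_pair {T U V : topologicalType} (f : T -> U) (g : T -> V) :
  continuous f -> continuous g -> continuous (fun x => (f x, g x)).
Proof. by move=> cf cg x; apply: cvg_pair; [exact: cf | exact: cg]. Qed.
Lemma cont_fst {U V : topologicalType} : continuous (@fst U V).
Proof. by move=> x; exact: cvg_fst. Qed.
Lemma cont_snd {U V : topologicalType} : continuous (@snd U V).
Proof. by move=> x; exact: cvg_snd. Qed.
Lemma cont_comp {T U V : topologicalType} (f : T -> U) (g : U -> V) :
  continuous f -> continuous g -> continuous (g \o f).
Proof. by move=> cf cg x; apply: continuous_comp; [exact: cf | exact: cg]. Qed.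

Lemma clamp_in (r : R) : (Num.min (Num.max r 0) 1) \in (`[0%R, 1%R]%classic : set R).
Proof.
rewrite inE /= in_itv /=; apply/andP; split.
  by rewrite le_min ler01 le_max lexx orbT.
by rewrite ge_min lexx orbT.
Qed.

Definition clampI (r : R) : unit_interval := exist _ (Num.min (Num.max r 0) 1) (clamp_in r).

Lemma clampI_cont : continuous clampI.
Proof.
apply: (@continuous_comp_initial _ _ _ (@set_val R (`[0%R, 1%R]%classic : set R))).
move=> x /=.
have := (@continuous_min R R (fun r : R => Num.max r 0) (fun _ => 1) x).
apply.
  apply: continuous_max => //; exact: cvg_cst.
exact: cvg_cst.
Qed.

Lemma val_cont : continuous (@set_val R (`[0%R, 1%R]%classic : set R) : unit_interval -> R).
Proof. exact: initial_continuous. Qed.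

Lemma I_compact : compact [set: unit_interval].
Proof.
have -> : [set: unit_interval] = clampI @` `[0%R, 1%R].
  apply/seteqP; split => // -[t tI] _.
  exists t.
    by move: tI; rewrite inE.
  apply: eq_sig_hprop => [*|/=]; first exact: Prop_irrelevance.
  move: tI; rewrite inE /= in_itv /= => /andP[t0 t1].
  by rewrite (max_idPl t0) (min_idPl t1).
apply: continuous_compact; last exact: segment_compact.
exact: continuous_subspaceT clampI_cont.
Qed.

Lemma I_lc : locally_compact [set: unit_interval].
Proof.
move=> x _; rewrite withinET; exists setT; first exact: filterT.
by split; [exact: I_compact | exact: closedT].
Qed.

Lemma I_reg : regular_space unit_interval.
Proof. exact: uniform_regular. Qed.

Lemma clampI_eq (r : R) : 0 <= r <= 1 -> set_val (clampI r) = r.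
Proof.
move=> /andP[r0 r1]; change (Num.min (Num.max r 0) 1 = r).
by rewrite (max_idPl r0) (min_idPl r1).
Qed.

Lemma I_ext (s t : unit_interval) : set_val s = set_val t -> s = t.
Proof. by move=> h; apply: eq_sig_hprop => [*|//]; exact: Prop_irrelevance. Qed.

Lemma clampI0 : clampI 0 = I0.
Proof. by apply: I_ext; rewrite clampI_eq //= lexx ler01. Qed.

Lemma clampI1 : clampI 1 = I1.
Proof. by apply: I_ext; rewrite clampI_eq //= lexx ler01. Qed.

Lemma valI0 : set_val I0 = 0. Proof. by []. Qed.
Lemma valI1 : set_val I1 = 1. Proof. by []. Qed.

Lemma I_bounds (t : unit_interval) : 0 <= set_val t <= 1.
Proof. move: t => [t p]; change (0 <= t <= 1); by move: p; rewrite inE /= in_itv. Qed.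

Lemma clampI_eqI r t : r = set_val t -> clampI r = t.
Proof. by move=> ->; apply: I_ext; rewrite clampI_eq // I_bounds. Qed.

Definition aff (a b r : R) : R := GRing.add (GRing.mul a r) b.

Lemma Rcont_aff (a b : R) : continuous (aff a b).
Proof.
have h1 : continuous (fun r : R => a * r) := @mulrl_continuous R a.
move=> r.
exact (@continuousD R R^o R (fun r => a * r) (fun _ => b) r (h1 r) (@cvg_cst R^o b R (nbhs r) _)).
Qed.

Lemma Imap_cont (a b : R) : continuous (fun t : unit_interval => clampI (aff a b (set_val t))).
Proof.
exact: (@cont_comp _ _ _ (fun t : unit_interval => aff a b (set_val t)) clampI
  (@cont_comp _ _ _ _ (aff a b) val_cont (Rcont_aff a b)) clampI_cont).
Qed.

Lemma homotopic_post (A B C : topologicalType) (h : B -> C) (f g : A -> B) :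
  continuous h -> homotopic f g -> homotopic (h \o f) (h \o g).
Proof.
move=> ch [H [cH H0 H1]]; exists (h \o H); split => //=.
- exact: cont_comp.
- by move=> a; rewrite H0.
- by move=> a; rewrite H1.
Qed.

Lemma homotopic_pre (A A' B : topologicalType) (k : A' -> A) (f g : A -> B) :
  continuous k -> homotopic f g -> homotopic (f \o k) (g \o k).
Proof.
move=> ck [H [cH H0 H1]].
exists (H \o (fun p : A' * unit_interval => (k p.1, p.2))); split => //=.
apply: cont_comp => //; apply: cont_pair; last exact: cont_snd.
exact (@cont_comp _ _ _ fst k cont_fst ck).
Qed.

Lemma homotopic_sym (A B : topologicalType) (f g : A -> B) :
  homotopic f g -> homotopic g f.
Proof.
move=> [H [cH H0 H1]].
exists (fun p => H (p.1, clampI (aff (GRing.opp 1) 1 (set_val p.2)))); split.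
- apply: (@cont_comp _ _ _ (fun p : A * unit_interval => (p.1, clampI (aff (GRing.opp 1) 1 (set_val p.2)))) H) => //.
  apply: cont_pair; first exact: cont_fst.
  exact (@cont_comp _ _ _ snd _ cont_snd (Imap_cont (GRing.opp 1) 1)).
- move=> a /=; rewrite -H1; congr H; congr pair.
  by apply: clampI_eqI; rewrite valI0 valI1 /aff mulr0 add0r.
- move=> a /=; rewrite -H0; congr H; congr pair.
  by apply: clampI_eqI; rewrite valI0 valI1 /aff mulr1 addNr.
Qed.

Definition two : R := GRing.add 1 1.
Definition halfR : R := GRing.inv two.
Definition mone : R := GRing.opp 1.

Lemma two_half : GRing.mul two halfR = 1.
Proof. by rewrite /halfR /two mulfV // gt_eqF // addr_gt0 // ltr01. Qed.

Lemma half_ge0 : (0 <= halfR)%O.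
Proof. by rewrite /halfR /two invr_ge0 addr_ge0 // ler01. Qed.

Lemma half_lt1 : (halfR < 1)%O.
Proof. rewrite /halfR /two invf_lt1; lra. Qed.

Definition concatH (A B : topologicalType) (H1 H2 : A * unit_interval -> B) (p : A * unit_interval) : B :=
  if (set_val p.2 <= halfR)%O then H1 (p.1, clampI (aff two 0 (set_val p.2)))
  else H2 (p.1, clampI (aff two mone (set_val p.2))).

Lemma closed_valle (A : topologicalType) (y : R) :
  closed [set p : A * unit_interval | (set_val p.2 <= y)%O].
Proof.
have cg : continuous (fun p : A * unit_interval => set_val p.2).
  exact (@cont_comp _ _ _ snd _ cont_snd val_cont).
exact (@preimage_closed _ _ (fun p : A * unit_interval => set_val p.2) [set x | (x <= y)%O] (fun x _ => cg x) (@closed_le R y)).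
Qed.

Lemma closed_valge (A : topologicalType) (y : R) :
  closed [set p : A * unit_interval | (y <= set_val p.2)%O].
Proof.
have cg : continuous (fun p : A * unit_interval => set_val p.2).
  exact (@cont_comp _ _ _ snd _ cont_snd val_cont).
exact (@preimage_closed _ _ (fun p : A * unit_interval => set_val p.2) [set x | (y <= x)%O] (fun x _ => cg x) (@closed_ge R y)).
Qed.

Lemma homotopic_trans (A B : topologicalType) (f g h : A -> B) :
  homotopic f g -> homotopic g h -> homotopic f h.
Proof.
move=> [H1 [cH1 H10 H11]] [H2 [cH2 H20 H21]].
have cG1 : continuous (fun p : A * unit_interval => H1 (p.1, clampI (aff two 0 (set_val p.2)))).
  apply: (@cont_comp _ _ _ (fun p : A * unit_interval => (p.1, clampI (aff two 0 (set_val p.2)))) H1) => //.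
  apply: cont_pair; first exact: cont_fst.
  exact (@cont_comp _ _ _ snd _ cont_snd (Imap_cont two 0)).
have cG2 : continuous (fun p : A * unit_interval => H2 (p.1, clampI (aff two mone (set_val p.2)))).
  apply: (@cont_comp _ _ _ (fun p : A * unit_interval => (p.1, clampI (aff two mone (set_val p.2)))) H2) => //.
  apply: cont_pair; first exact: cont_fst.
  exact (@cont_comp _ _ _ snd _ cont_snd (Imap_cont two mone)).
exists (@concatH A B H1 H2); split.
- apply/continuous_subspace_setT.
  have -> : [set: A * unit_interval] = [set p | (set_val p.2 <= halfR)%O] `|` [set p | (halfR <= set_val p.2)%O].
    apply/seteqP; split => // p _ /=.
    by case: (leP (set_val p.2) halfR) => hp; [left | right; apply: ltW].
  apply: withinU_continuous; [exact: closed_valle | exact: closed_valge | |].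
  + apply: (@subspace_eq_continuous _ [set p : A * unit_interval | (set_val p.2 <= halfR)%O] _ _ (@concatH A B H1 H2) _ (@continuous_subspaceT _ _ _ _ cG1)).
    by move=> p; rewrite inE /= /concatH => ->.
  + apply: (@subspace_eq_continuous _ [set p : A * unit_interval | (halfR <= set_val p.2)%O] _ _ (@concatH A B H1 H2) _ (@continuous_subspaceT _ _ _ _ cG2)).
    move=> p; rewrite inE /= /concatH => hp.
    case: ifPn => // hp'.
    have e : set_val p.2 = halfR by apply/eqP; rewrite eq_le hp hp'.
    change (H2 (p.1, clampI (aff two mone (set_val p.2))) = H1 (p.1, clampI (aff two 0 (set_val p.2)))); rewrite e.
    have -> : clampI (aff two 0 halfR) = I1.
      by apply: clampI_eqI; rewrite /aff addr0 two_half.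
    have -> : clampI (aff two mone halfR) = I0.
      by apply: clampI_eqI; rewrite /aff two_half /mone addrN.
    by rewrite H11 H20.
- move=> a; rewrite /concatH /= valI0 half_ge0.
  have -> : clampI (aff two 0 0) = I0 by apply: clampI_eqI; rewrite /aff mulr0 addr0.
  exact: H10.
- move=> a; rewrite /concatH /= valI1 leNgt half_lt1 /=.
  have -> : clampI (aff two mone 1) = I1.
    by apply: clampI_eqI; rewrite /aff mulr1 /two /mone addrK.
  exact: H21.
Qed.

Module COm.
Import ArrowAsCompactOpen.
Definition CO (X : topologicalType) : topologicalType := continuousType unit_interval X.
Definition FO (X : topologicalType) : topologicalType := (unit_interval -> X).

Lemma FO_cont (X : topologicalType) :
  continuous (id : {compact-open, unit_interval -> X} -> FO X).
Proof. move=> x. exact: cvg_id. Qed.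

Lemma path_CO (X : topologicalType) : continuous (id : path_space X -> CO X).
Proof.
apply: (@continuous_comp_initial _ _ (FO X) (id : continuousType unit_interval X -> FO X)).
have h1 : continuous ((fun g => g) : path_space X -> {compact-open, unit_interval -> X}).
  exact: initial_continuous.
move=> x.
exact (@continuous_comp (path_space X) {compact-open, unit_interval -> X} (FO X) _ id x
  (h1 x) (@FO_cont X _)).
Qed.

Lemma eval_path (X : topologicalType) :
  locally_compact [set: unit_interval] -> regular_space unit_interval ->
  continuous (fun p : path_space X * unit_interval =>
     (p.1 : continuousType unit_interval X) p.2).
Proof.
move=> lc rg.
have H : continuous (fun p : CO X * unit_interval => (p.1 : continuousType unit_interval X) p.2).
  have -> : (fun p : CO X * unit_interval => (p.1 : continuousType unit_interval X) p.2) = eval.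
    by apply/funext => -[].
  exact: (@eval_continuous unit_interval X lc rg).
pose f1 : path_space X * unit_interval -> CO X := (id : path_space X -> CO X) \o fst.
have cf1 : continuous f1 := (@cont_comp (path_space X * unit_interval)%type (path_space X) (CO X) fst id cont_fst (@path_CO X)).
have cj := @cont_pair (path_space X * unit_interval)%type (CO X) unit_interval f1 snd cf1 cont_snd.
have K := @cont_comp _ _ _ _ _ cj H.
exact K.
Qed.
End COm.
Import COm.

Theorem mainTheorem6 (G : topGroupType) (X : topologicalType)
    (A : gaction G X) (x0 : X) :
  TCGinf_eq A 0 -> nullhomotopic (orbit_map A).
Proof.
move=> [[k Hk] _].
case: Hk => k' [_ [[U [oU covU hs]] _]].
have [s [cs hs0]] := hs ord0.
have UT : forall z, U ord0 z.
  move=> z; have : (\bigcup_i U i) z by rewrite covU.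
  by case=> i _; rewrite (ord1 i).
pose e : X -> set_type (U ord0) := fun x => exist _ (x0, x) (mem_set (UT (x0, x))).
have ce : continuous e.
  apply: (@continuous_comp_initial _ _ _ (@set_val _ (U ord0))).
  exact (@cont_pair _ _ _ (fun=> x0) id (fun x => @cst_continuous _ _ x0 x) (fun x => @cvg_id _ (nbhs x))).
pose Gm := s \o e.
have cGm : continuous Gm := @cont_comp _ _ _ e s ce cs.
pose p (i : 'I_k'.+1) (x : X) : path_space X := (set_val (Gm x)) i.
have cp : forall i, continuous (p i).
  move=> i.
  have c1 : continuous (fun g : Pk A k'.+1 => set_val g) by exact: initial_continuous.
  have c2 := @proj_continuous 'I_k'.+1 (fun=> path_space X) i.
  exact (@cont_comp _ _ _ Gm _ cGm (@cont_comp _ _ _ _ _ c1 c2)).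
have pathH : forall i, homotopic (fun x => (p i x : continuousType unit_interval X) I0)
                                   (fun x => (p i x : continuousType unit_interval X) I1).
  move=> i.
  exists (fun q : X * unit_interval => (p i q.1 : continuousType unit_interval X) q.2); split => //.
  have cq := @cont_pair _ _ _ (fun q : X * unit_interval => p i q.1) snd
     (@cont_comp _ _ _ fst (p i) cont_fst (cp i)) cont_snd.
  exact (@cont_comp _ _ _ _ _ cq (eval_path X I_lc I_reg)).
pose rho := orbit_map A.
have cr : continuous rho by exact: pi_continuous.
have h1 := @homotopic_pre _ _ _ e _ _ ce hs0.
have hE1 : homotopic (rho \o (fun x => (p ord0 x : continuousType unit_interval X) I0)) (fun _ => rho x0).
  exact (@homotopic_post _ _ _ _ _ _ (@cont_comp _ _ _ fst rho cont_fst cr) h1).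
have hE2 : homotopic (rho \o (fun x => (p ord_max x : continuousType unit_interval X) I1)) rho.
  exact (@homotopic_post _ _ _ _ _ _ (@cont_comp _ _ _ snd rho cont_snd cr) h1).
have link : forall (n : nat) (hn : leq n.+2 k'.+1),
    rho \o (fun x => (p (Ordinal (ltnW hn)) x : continuousType unit_interval X) I1) =
    rho \o (fun x => (p (Ordinal hn) x : continuousType unit_interval X) I0).
  move=> n hn; apply/funext => x /=.
  have P : Pk_set A k'.+1 (set_val (Gm x)).
    exact: set_valP.
  have [g hg] := P (Ordinal (ltnW hn)) (Ordinal hn) erefl.
  rewrite /rho /orbit_map; apply/eqquotP.
  by apply/asboolP; exists g.
have chain : forall n (hn : leq n.+1 k'.+1),
    homotopic (rho \o (fun x => (p ord0 x : continuousType unit_interval X) I0))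
              (rho \o (fun x => (p (Ordinal hn) x : continuousType unit_interval X) I1)).
  elim=> [|n IH] hn.
    have -> : Ordinal hn = ord0 by apply: val_inj.
    exact: (@homotopic_post _ _ _ _ _ _ cr (pathH ord0)).
  apply: (@homotopic_trans _ _ _ _ _ (IH (ltnW hn))).
  rewrite link.
  exact: (@homotopic_post _ _ _ _ _ _ cr (pathH _)).
exists (rho x0).
apply: (@homotopic_trans _ _ _ _ _ (@homotopic_sym _ _ _ _ hE2)).
apply: (@homotopic_trans _ _ _ _ _ _ hE1).
have -> : (ord_max : 'I_k'.+1) = Ordinal (ltnSn k') by apply: val_inj.
exact: (@homotopic_sym _ _ _ _ (chain k' (ltnSn k'))).
Qed.
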